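(* For $1\le m\le n$, $m\,E_m\!\left[\frac1\ell\right]+\sum_{j=1}^{m-1}E_m\!\left[\frac{\tau_j}{\ell}\right]=1$.
   Context: $\mathbf X=\{X_1,\dots,X_n\}$ with the uniform measure. $\mathcal X_m$ is the set of finite sequences $\chi=(\chi_1,\dots,\chi_\ell)$ of elements of $\mathbf X$ having exactly $m$ distinct entries and with $\chi_\ell$ different from all earlier entries; $\ell(\chi)$ is its length and $\chi$ has probability $n^{-\ell(\chi)}$; $E_m[f]=\sum_{\chi\in\mathcal X_m}f(\chi)n^{-\ell(\chi)}$. For $0\le j\le m$, $t_j(\chi)$ is the least $t\ge0$ with $|\{\chi_1,\dots,\chi_t\}|=j$, and $\tau_j(\chi)=t_{j+1}(\chi)-t_j(\chi)-1$ for $1\le j\le m-1$. *)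

(* Defs.v *)
From Stdlib Require Import Reals List Arith.
Import ListNotations.
Open Scope R_scope.

(* The ground set X = {X_1,...,X_n} is encoded as {0,...,n-1} (nat). *)

Fixpoint all_seqs (n L : nat) : list (list nat) :=
  match L with
  | O => [[]]
  | S L' => flat_map (fun s => map (fun x => x :: s) (seq 0 n)) (all_seqs n L')
  end.

Definition ndistinct (s : list nat) : nat := length (nodup Nat.eq_dec s).

Definition in_Xm (m : nat) (s : list nat) : bool :=
  match s with
  | [] => false
  | _ :: _ =>
      Nat.eqb (ndistinct s) m &&
      negb (existsb (Nat.eqb (last s 0%nat)) (removelast s))
  end.

(* t_j(chi): least t >= 0 with |{chi_1,...,chi_t}| = j
   (searched among t = 0..length chi; defined for j <= m). *)
Fixpoint find_t (j : nat) (s : list nat) (t fuel : nat) : nat :=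
  match fuel with
  | O => t
  | S f => if Nat.eqb (ndistinct (firstn t s)) j then t
           else find_t j s (S t) f
  end.

Definition t_ (j : nat) (s : list nat) : nat := find_t j s 0 (S (length s)).

Definition tau (j : nat) (s : list nat) : R :=
  INR (t_ (S j) s) - INR (t_ j s) - 1.

Definition sumR (l : list R) : R := fold_right Rplus 0 l.

Definition Em_slice (n m : nat) (f : list nat -> R) (L : nat) : R :=
  sumR (map (fun s => f s * (/ INR n) ^ L)
            (filter (in_Xm m) (all_seqs n L))).

(* E_m[f] = v : the (nonnegative-term) series sum_chi f(chi) n^{-l(chi)},
   grouped by length, converges to v. *)
Definition Em_sum (n m : nat) (f : list nat -> R) (v : R) : Prop :=
  infinite_sum (Em_slice n m f) v.

Definition ell (s : list nat) : R := INR (length s).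

(* Main.v *)
Require Import Defs.
From Stdlib Require Import Reals List Arith Lia Lra.
Import ListNotations.
Open Scope R_scope.

Lemma sumR_app l1 l2 : sumR (l1 ++ l2) = sumR l1 + sumR l2.
Proof. induction l1; simpl; [ring | rewrite IHl1; ring]. Qed.

Lemma sumR_map_plus {A} (f g : A -> R) l :
  sumR (map (fun x => f x + g x) l) = sumR (map f l) + sumR (map g l).
Proof. induction l; simpl; [ring | rewrite IHl; ring]. Qed.

Lemma sumR_map_scal {A} (c : R) (f : A -> R) l :
  sumR (map (fun x => c * f x) l) = c * sumR (map f l).
Proof. induction l; simpl; [ring | rewrite IHl; ring]. Qed.

Lemma sumR_map_ext {A} (f g : A -> R) l :
  (forall x, f x = g x) -> sumR (map f l) = sumR (map g l).
Proof. intro H; induction l; simpl; [ring | rewrite IHl, H; ring]. Qed.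

Lemma sumR_map_ext_in {A} (f g : A -> R) l :
  (forall x, In x l -> f x = g x) -> sumR (map f l) = sumR (map g l).
Proof. intro H; induction l; simpl; [ring|]. rewrite IHl, H; simpl; auto. intros; apply H; simpl; auto. Qed.

Lemma sumR_map_zero {A} (l : list A) : sumR (map (fun _ => 0) l) = 0.
Proof. induction l; simpl; [ring | rewrite IHl; ring]. Qed.

Lemma sumR_map_le {A} (f g : A -> R) l :
  (forall x, f x <= g x) -> sumR (map f l) <= sumR (map g l).
Proof. intro H; induction l; simpl; [lra | specialize (H a); lra]. Qed.

Lemma sumR_map_nonneg {A} (f : A -> R) l :
  (forall x, 0 <= f x) -> 0 <= sumR (map f l).
Proof. intro H; induction l; simpl; [lra | specialize (H a); lra]. Qed.

Lemma sumR_map_ge_term {A} (f : A -> R) l x :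
  (forall y, 0 <= f y) -> In x l -> f x <= sumR (map f l).
Proof.
  intros H Hx; induction l; simpl in *; [contradiction|].
  destruct Hx as [<-|Hx].
  - pose proof (sumR_map_nonneg f l H); lra.
  - specialize (IHl Hx); specialize (H a); lra.
Qed.

Lemma sumR_swap {A B} (h : A -> B -> R) l1 l2 :
  sumR (map (fun a => sumR (map (fun b => h a b) l2)) l1) =
  sumR (map (fun b => sumR (map (fun a => h a b) l1)) l2).
Proof.
  induction l1; simpl.
  - now rewrite sumR_map_zero.
  - rewrite IHl1, <- sumR_map_plus; reflexivity.
Qed.

Lemma sumR_map_const {A} c (l : list A) : sumR (map (fun _ => c) l) = INR (length l) * c.
Proof. induction l; simpl length; rewrite ?S_INR; simpl; [ring | rewrite IHl; ring]. Qed.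

Lemma sumR_flat_map {A B} (g : B -> R) (F : A -> list B) l :
  sumR (map g (flat_map F l)) = sumR (map (fun s => sumR (map g (F s))) l).
Proof. induction l; simpl; auto. rewrite map_app, sumR_app, IHl; reflexivity. Qed.

Definition SL (n L : nat) (g : list nat -> R) := sumR (map g (all_seqs n L)).

Lemma SL_S_cons n L g :
  SL n (S L) g = SL n L (fun s => sumR (map (fun x => g (x :: s)) (seq 0 n))).
Proof. unfold SL; simpl. rewrite sumR_flat_map. apply sumR_map_ext; intro s. now rewrite map_map. Qed.

Lemma SL_ext n L f g : (forall s, f s = g s) -> SL n L f = SL n L g.
Proof. intro; unfold SL; now apply sumR_map_ext. Qed.

Lemma SL_S_app n L g :
  SL n (S L) g = SL n L (fun s => sumR (map (fun x => g (s ++ [x])) (seq 0 n))).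
Proof.
  revert g; induction L; intro g.
  - rewrite SL_S_cons. unfold SL; simpl. reflexivity.
  - rewrite SL_S_cons. rewrite IHL. rewrite SL_S_cons.
    apply SL_ext; intro s. simpl. apply sumR_swap.
Qed.

Lemma SL_plus n L f g : SL n L (fun s => f s + g s) = SL n L f + SL n L g.
Proof. apply sumR_map_plus. Qed.

Lemma SL_le n L f g : (forall s, f s <= g s) -> SL n L f <= SL n L g.
Proof. apply sumR_map_le. Qed.

Lemma SL_const n L c : SL n L (fun _ => c) = INR n ^ L * c.
Proof.
  revert c; induction L; intro c.
  - unfold SL; simpl; ring.
  - rewrite SL_S_cons. rewrite (SL_ext _ _ _ (fun _ => INR n * c)).
    + rewrite IHL; simpl; ring.
    + intro; rewrite sumR_map_const, length_seq; ring.
Qed.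

Lemma nd_ge_of_nodup (l l' : list nat) : NoDup l -> incl l l' -> (length l <= ndistinct l')%nat.
Proof.
  intros H Hi. apply NoDup_incl_length; auto.
  intros x Hx. apply nodup_In. auto.
Qed.

Lemma nd_mono l l' : incl l l' -> (ndistinct l <= ndistinct l')%nat.
Proof.
  intro Hi. apply nd_ge_of_nodup. apply NoDup_nodup.
  intros x Hx. apply Hi. eapply nodup_In; eauto.
Qed.

Lemma nd_app_in s x : In x s -> ndistinct (s ++ [x]) = ndistinct s.
Proof.
  intro H. apply Nat.le_antisymm; apply nd_mono; intros y Hy.
  - apply in_app_or in Hy; destruct Hy as [Hy|[<-|[]]]; auto.
  - apply in_or_app; auto.
Qed.

Lemma nd_app_notin s x : ~ In x s -> ndistinct (s ++ [x]) = S (ndistinct s).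
Proof.
  intro H. apply Nat.le_antisymm.
  - change (S (ndistinct s)) with (length (x :: nodup Nat.eq_dec s)).
    apply NoDup_incl_length. apply NoDup_nodup.
    intros y Hy. apply nodup_In in Hy. apply in_app_or in Hy.
    destruct Hy as [Hy|[<-|[]]]; [right; apply nodup_In; auto | left; auto].
  - change (S (ndistinct s)) with (length (x :: nodup Nat.eq_dec s)).
    apply nd_ge_of_nodup.
    + constructor; [rewrite nodup_In; auto | apply NoDup_nodup].
    + intros y [<-|Hy]; apply in_or_app; [right; left; auto | left; eapply nodup_In; eauto].
Qed.

Lemma mem_iff x s : existsb (Nat.eqb x) s = true <-> In x s.
Proof.
  rewrite existsb_exists. split.
  - intros [y [Hy Hb]]. apply Nat.eqb_eq in Hb; subst; auto.
  - intro H; exists x; split; auto; apply Nat.eqb_refl.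
Qed.

Lemma in_Xm_app m s x :
  in_Xm m (s ++ [x]) = (Nat.eqb (ndistinct (s ++ [x])) m && negb (existsb (Nat.eqb x) s))%bool.
Proof.
  unfold in_Xm. rewrite last_last, removelast_last. destruct s; reflexivity.
Qed.

Definition indb (b : bool) : R := if b then 1 else 0.

Lemma pointwise_ge m s x :
  indb (Nat.leb m (ndistinct (s ++ [x]))) =
  indb (Nat.leb m (ndistinct s)) + indb (in_Xm m (s ++ [x])).
Proof.
  rewrite in_Xm_app. destruct (existsb (Nat.eqb x) s) eqn:E.
  - apply mem_iff in E. rewrite nd_app_in by auto. simpl.
    rewrite Bool.andb_false_r. simpl; ring.
  - assert (~ In x s) by (rewrite <- mem_iff; congruence).
    rewrite nd_app_notin by auto. change (negb false) with true. rewrite Bool.andb_true_r.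
    destruct (Nat.leb_spec m (S (ndistinct s))), (Nat.leb_spec m (ndistinct s)),
      (Nat.eqb_spec (S (ndistinct s)) m); unfold indb; try lra; lia.
Qed.

Lemma find_t_spec j s t fuel T :
  (t <= T)%nat -> (T < t + fuel)%nat ->
  (forall t', (t <= t' < T)%nat -> ndistinct (firstn t' s) <> j) ->
  ndistinct (firstn T s) = j -> find_t j s t fuel = T.
Proof.
  revert t; induction fuel; intros t H1 H2 H3 H4; [lia|].
  simpl. destruct (Nat.eqb_spec (ndistinct (firstn t s)) j).
  - destruct (Nat.eq_dec t T); auto. exfalso; apply (H3 t); auto; lia.
  - apply IHfuel; try lia.
    + destruct (Nat.eq_dec t T); subst; [contradiction|lia].
    + intros; apply H3; lia.
Qed.

Lemma find_t_le j s t fuel : (find_t j s t fuel <= t + fuel)%nat.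
Proof.
  revert t; induction fuel; intro t; simpl; [lia|].
  destruct (Nat.eqb _ _); [lia|]. specialize (IHfuel (S t)); lia.
Qed.

Lemma in_firstn (l : list nat) k y : In y (firstn k l) -> In y l.
Proof. intro H. rewrite <- (firstn_skipn k l). apply in_or_app; auto. Qed.

Lemma t1_val m s : in_Xm m s = true -> t_ 1 s = 1%nat.
Proof.
  intro H. destruct s as [|a s']; [discriminate|].
  unfold t_. apply find_t_spec; simpl length; try lia.
  - intros t' Ht'. assert (t' = 0%nat) by lia; subst. simpl. discriminate.
  - reflexivity.
Qed.

Lemma tm_val m s : in_Xm m s = true -> t_ m s = length s.
Proof.
  intro H. destruct s as [|a s'] eqn:Es; [discriminate|].
  rewrite <- Es in *.
  assert (Hs : s = removelast s ++ [last s 0%nat]).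
  { apply app_removelast_last. subst; discriminate. }
  unfold in_Xm in H. rewrite Es in H. rewrite <- Es in H.
  apply andb_prop in H as [H1 H2]. apply Nat.eqb_eq in H1.
  apply Bool.negb_true_iff in H2.
  assert (Hn : ~ In (last s 0%nat) (removelast s)) by (rewrite <- mem_iff; congruence).
  assert (Hnd : ndistinct s = S (ndistinct (removelast s))).
  { rewrite Hs at 1. apply nd_app_notin; auto. }
  assert (Hlen : length s = S (length (removelast s))).
  { rewrite Hs at 1. rewrite length_app; simpl; lia. }
  unfold t_. apply find_t_spec; try lia.
  - intros t' Ht'.
    assert (ndistinct (firstn t' s) <= ndistinct (removelast s))%nat.
    { apply nd_mono. rewrite Hs at 1. rewrite firstn_app.
      replace (t' - length (removelast s))%nat with 0%nat by lia.
      simpl. rewrite app_nil_r. intros y Hy. eapply in_firstn; eauto. }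
    lia.
  - rewrite firstn_all. auto.
Qed.

Lemma telescope (T : nat -> R) c k :
  sumR (map (fun j => (T (S j) - T j - 1) / c) (seq 1 k)) = (T (S k) - T 1%nat - INR k) / c.
Proof.
  induction k.
  - simpl. unfold Rdiv; ring.
  - rewrite seq_S, map_app, sumR_app, IHk. cbn [map sumR]. replace (1 + k)%nat with (S k) by lia. rewrite (S_INR k). unfold sumR; simpl fold_right. unfold Rdiv; ring.
Qed.

Lemma per_seq m s : (1 <= m)%nat -> in_Xm m s = true ->
  INR m * / ell s + sumR (map (fun j => tau j s / ell s) (seq 1 (m - 1))) = 1.
Proof.
  intros Hm H. unfold tau.
  rewrite (telescope (fun j => INR (t_ j s))).
  replace (S (m - 1)) with m by lia.
  rewrite tm_val, t1_val with (m := m) by auto.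
  assert (0 < ell s).
  { unfold ell. destruct s; [discriminate|]. simpl length. rewrite S_INR.
    pose proof (pos_INR (length s)); lra. }
  rewrite minus_INR by lia. unfold ell in *. simpl (INR 1). field. lra.
Qed.

Lemma tau_bound j s : (1 <= length s)%nat -> -3 <= tau j s / ell s <= 3.
Proof.
  intro H. unfold tau, ell.
  pose proof (find_t_le (S j) s 0 (S (length s))).
  pose proof (find_t_le j s 0 (S (length s))).
  unfold t_.
  apply le_INR in H0. apply le_INR in H1. apply le_INR in H. rewrite Nat.add_0_l in H0, H1.
  pose proof (pos_INR (find_t (S j) s 0 (S (length s)))).
  pose proof (pos_INR (find_t j s 0 (S (length s)))).
  rewrite S_INR in H0, H1. simpl in H.
  set (L := INR (length s)) in *.
  split.
  - apply Rmult_le_reg_r with L; [lra|]. unfold Rdiv. rewrite Rmult_assoc, Rinv_l by lra. lra.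
  - apply Rmult_le_reg_r with L; [lra|]. unfold Rdiv. rewrite Rmult_assoc, Rinv_l by lra. lra.
Qed.

Lemma slice_SL n m f L :
  Em_slice n m f L = SL n L (fun s => if in_Xm m s then f s * (/ INR n) ^ L else 0).
Proof.
  unfold Em_slice, SL. induction (all_seqs n L); simpl; auto.
  destruct (in_Xm m a); simpl; rewrite IHl; ring.
Qed.

Lemma ind_nonneg b : 0 <= indb b.
Proof. destruct b; unfold indb; lra. Qed.

Section Prob.
Variables n m : nat.
Hypothesis Hm1 : (1 <= m)%nat.
Hypothesis Hmn : (m <= n)%nat.

Let q := / INR n.
Lemma n_pos : 0 < INR n.
Proof. apply lt_0_INR; lia. Qed.
Lemma q_pos : 0 < q.
Proof. unfold q; apply Rinv_0_lt_compat, n_pos. Qed.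
Lemma nq : INR n * q = 1.
Proof. unfold q; field; pose proof n_pos; lra. Qed.

Definition D L := SL n L (fun s => indb (Nat.leb m (ndistinct s)) * q ^ L).
Definition E L := SL n L (fun s => indb (negb (Nat.leb m (ndistinct s))) * q ^ L).

Lemma slice1_S L : Em_slice n m (fun _ => 1) (S L) = D (S L) - D L.
Proof.
  rewrite slice_SL. unfold D. rewrite !SL_S_app.
  rewrite (SL_ext n L (fun s => indb (Nat.leb m (ndistinct s)) * q ^ L)
     (fun s => sumR (map (fun x => indb (Nat.leb m (ndistinct s)) * q ^ S L) (seq 0 n)))).
  2:{ intro s. rewrite sumR_map_const, length_seq. simpl. rewrite <- (Rmult_1_r (indb _ * q ^ L)) at 1. rewrite <- nq. ring. }
  apply Rplus_eq_reg_r with (SL n L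
      (fun s => sumR (map (fun _ : nat => indb (m <=? ndistinct s)%nat * q ^ S L) (seq 0 n)))).
  ring_simplify. rewrite <- SL_plus. apply SL_ext; intro s.
  rewrite <- sumR_map_plus. apply sumR_map_ext; intro x.
  rewrite pointwise_ge. fold q. destruct (in_Xm m (s ++ [x])); unfold indb; ring.
Qed.

Lemma slice_0 f : Em_slice n m f 0 = 0.
Proof. reflexivity. Qed.

Lemma D0 : D 0 = 0.
Proof.
  unfold D, SL; simpl. unfold ndistinct; simpl. destruct m; [lia|]. unfold indb; simpl; ring.
Qed.

Lemma partial_D N : sum_f_R0 (Em_slice n m (fun _ => 1)) N = D N.
Proof.
  induction N; simpl.
  - rewrite slice_0, D0; reflexivity.
  - rewrite IHN, slice1_S; ring.
Qed.

Lemma D_E N : D N = 1 - E N.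
Proof.
  unfold D, E. apply Rplus_eq_reg_r with (SL n N (fun s => indb (negb (m <=? ndistinct s)%nat) * q ^ N)).
  rewrite <- SL_plus. rewrite (SL_ext _ _ _ (fun _ => q ^ N)).
  - rewrite SL_const, <- Rpow_mult_distr, nq, pow1; ring.
  - intro s; destruct (Nat.leb m (ndistinct s)); unfold indb; simpl; ring.
Qed.

Lemma count_neq_gen x (l : list nat) : NoDup l ->
  sumR (map (fun y => indb (negb (Nat.eqb x y))) l) =
  INR (length l) - (if in_dec Nat.eq_dec x l then 1 else 0).
Proof.
  induction 1.
  - simpl; ring.
  - change (sumR (map (fun y => indb (negb (Nat.eqb x y))) (x0 :: l)))
      with (indb (negb (Nat.eqb x x0)) + sumR (map (fun y => indb (negb (Nat.eqb x y))) l)).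
    rewrite IHNoDup. rewrite length_cons, S_INR.
    destruct (in_dec Nat.eq_dec x (x0 :: l)) as [Hi|Hi];
    destruct (in_dec Nat.eq_dec x l) as [Hj|Hj];
    destruct (Nat.eqb_spec x x0); subst; unfold indb; simpl negb; cbv beta iota;
    first [ring | contradiction | (destruct Hi as [Hh|Hh]; [congruence|contradiction])
          | (exfalso; apply Hi; (left; reflexivity) || (right; assumption))].
Qed.

Lemma count_neq x : (x < n)%nat -> sumR (map (fun y => indb (negb (Nat.eqb x y))) (seq 0 n)) = INR n - 1.
Proof.
  intro H. rewrite count_neq_gen by apply seq_NoDup. rewrite length_seq.
  destruct (in_dec Nat.eq_dec x (seq 0 n)); [ring|]. exfalso; apply n0, in_seq; lia.
Qed.

Lemma count_notin x : (x < n)%nat -> forall N c,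
  SL n N (fun s => indb (negb (existsb (Nat.eqb x) s)) * c) = (INR n - 1) ^ N * c.
Proof.
  intros Hx N; induction N; intro c.
  - unfold SL; simpl; unfold indb; simpl; ring.
  - rewrite SL_S_cons.
    rewrite (SL_ext _ _ _ (fun s => indb (negb (existsb (Nat.eqb x) s)) * ((INR n - 1) * c))).
    + rewrite IHN; simpl; ring.
    + intro s. simpl.
      rewrite (sumR_map_ext _ (fun y => indb (negb (existsb (Nat.eqb x) s)) * c * indb (negb (Nat.eqb x y)))).
      * rewrite sumR_map_scal. rewrite count_neq by auto. ring.
      * intro y. destruct (Nat.eqb x y), (existsb (Nat.eqb x) s); unfold indb; simpl; ring.
Qed.

Lemma E_bound N : E N <= INR n * ((INR n - 1) * q) ^ N.
Proof.
  unfold E.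
  apply Rle_trans with (SL n N (fun s => sumR (map (fun x => indb (negb (existsb (Nat.eqb x) s)) * q ^ N) (seq 0 n)))).
  - apply SL_le; intro s. destruct (Nat.leb_spec m (ndistinct s)).
    + unfold indb at 1; simpl. rewrite Rmult_0_l. apply sumR_map_nonneg.
      intro; apply Rmult_le_pos; [apply ind_nonneg | apply pow_le; pose proof q_pos; lra].
    + destruct (existsb (fun x => negb (existsb (Nat.eqb x) s)) (seq 0 n)) eqn:Ex.
      * apply existsb_exists in Ex as [x [Hx Hb]].
        eapply Rle_trans; [| apply (sumR_map_ge_term _ _ x); [| exact Hx]].
        -- cbv beta. rewrite Hb. destruct (Nat.leb_spec m (ndistinct s)); [lia|]. unfold indb; simpl; lra.
        -- intro; apply Rmult_le_pos; [apply ind_nonneg | apply pow_le; pose proof q_pos; lra].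
      * exfalso.
        assert (incl (seq 0 n) s).
        { intros x Hx. apply mem_iff. destruct (existsb (Nat.eqb x) s) eqn:E1; auto.
          assert (existsb (fun x => negb (existsb (Nat.eqb x) s)) (seq 0 n) = true).
          { apply existsb_exists; exists x; rewrite E1; auto. }
          congruence. }
        pose proof (nd_ge_of_nodup _ _ (seq_NoDup n 0) H0). rewrite length_seq in H1. lia.
  - unfold SL. rewrite sumR_swap. fold (SL n N).
    rewrite (sumR_map_ext_in _ (fun _ => (INR n - 1) ^ N * q ^ N)).
    + rewrite sumR_map_const, length_seq, Rpow_mult_distr. lra.
    + intros x Hx. apply in_seq in Hx. unfold SL. apply count_notin. lia.
Qed.

Lemma E_nonneg N : 0 <= E N.
Proof.
  unfold E, SL. apply sumR_map_nonneg. intro; apply Rmult_le_pos; [apply ind_nonneg | apply pow_le; pose proof q_pos; lra].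
Qed.

Lemma total_one : Em_sum n m (fun _ => 1) 1.
Proof.
  intros eps Heps.
  set (r := (INR n - 1) * q).
  assert (Hr : Rabs r < 1).
  { assert (0 <= r < 1).
    { unfold r. pose proof nq. pose proof q_pos. assert (1 <= INR n) by (apply (le_INR 1); lia). nra. }
    rewrite Rabs_right; lra. }
  destruct (pow_lt_1_zero r Hr (eps / INR n)) as [N HN].
  { apply Rdiv_lt_0_compat; [lra | apply n_pos]. }
  exists N; intros k Hk. rewrite partial_D, D_E. unfold Rdist.
  replace (1 - E k - 1) with (- E k) by ring. rewrite Rabs_Ropp, Rabs_right by (apply Rle_ge, E_nonneg).
  specialize (HN k Hk). pose proof (E_bound k). fold r in H.
  pose proof n_pos.
  assert (INR n * r ^ k < eps).
  { apply Rle_lt_trans with (INR n * Rabs (r ^ k)).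
    - apply Rmult_le_compat_l; [lra | apply RRle_abs].
    - apply Rmult_lt_reg_r with (/ INR n). apply Rinv_0_lt_compat; lra.
      replace (INR n * Rabs (r ^ k) * / INR n) with (Rabs (r ^ k)) by (field; lra).
      exact HN. }
  lra.
Qed.

End Prob.

Lemma inf_ext f g v : (forall L, f L = g L) -> infinite_sum f v -> infinite_sum g v.
Proof.
  intros H Hf eps He. destruct (Hf eps He) as [N HN]. exists N; intros k Hk.
  rewrite <- (sum_eq f g) by auto. auto.
Qed.

Lemma inf_plus f g a b : infinite_sum f a -> infinite_sum g b ->
  infinite_sum (fun L => f L + g L) (a + b).
Proof.
  intros Hf Hg. pose proof (CV_plus _ _ _ _ Hf Hg) as H.
  intros eps He. destruct (H eps He) as [N HN]. exists N; intros k Hk.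
  rewrite sum_plus. apply HN; auto.
Qed.

Lemma inf_scal c f a : infinite_sum f a -> infinite_sum (fun L => c * f L) (c * a).
Proof.
  intros Hf. assert (Hc : Un_cv (fun _ => c) c).
  { intros eps He. exists 0%nat. intros; unfold Rdist. rewrite Rminus_diag, Rabs_R0; lra. }
  pose proof (CV_mult _ _ _ _ Hc Hf) as H.
  intros eps He. destruct (H eps He) as [N HN]. exists N; intros k Hk.
  rewrite (sum_eq _ (fun i => f i * c)) by (intros; ring).
  rewrite <- scal_sum. apply HN; auto.
Qed.

Lemma inf_zero : infinite_sum (fun _ => 0) 0.
Proof.
  intros eps He. exists 0%nat; intros k Hk.
  assert (sum_f_R0 (fun _ => 0) k = 0).
  { induction k; simpl; [auto | rewrite IHk by lia; ring]. }
  unfold Rdist. rewrite H, Rminus_diag, Rabs_R0; lra.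
Qed.

Lemma inf_list (h : nat -> nat -> R) (b : nat -> R) l :
  (forall j, In j l -> infinite_sum (h j) (b j)) ->
  infinite_sum (fun L => sumR (map (fun j => h j L) l)) (sumR (map b l)).
Proof.
  induction l; intro H; simpl.
  - apply inf_zero.
  - apply inf_plus; [apply H; left; auto | apply IHl; intros; apply H; right; auto].
Qed.

Section Conv.
Variables n m : nat.
Hypothesis Hm1 : (1 <= m)%nat.
Hypothesis Hmn : (m <= n)%nat.

Lemma conv f : (forall s, in_Xm m s = true -> -3 <= f s <= 3) -> { v | Em_sum n m f v }.
Proof.
  intro Hf.
  pose proof (total_one n m Hm1 Hmn) as H1.
  assert (Hq : 0 < / INR n) by (apply Rinv_0_lt_compat, lt_0_INR; lia).
  destruct (Rseries_CV_comp (fun L => Em_slice n m f L + 3 * Em_slice n m (fun _ => 1) L)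
              (fun L => 6 * Em_slice n m (fun _ => 1) L)) as [v Hv].
  - intro L. rewrite !slice_SL. unfold SL. rewrite <- !sumR_map_scal, <- sumR_map_plus.
    split; [apply sumR_map_nonneg | apply sumR_map_le]; intro s;
    destruct (in_Xm m s) eqn:E; try lra;
    pose proof (Hf s E); pose proof (pow_lt _ L Hq); nra.
  - exists (6 * 1). apply inf_scal; auto.
  - exists (v - 3 * 1).
    apply inf_ext with (fun L => (Em_slice n m f L + 3 * Em_slice n m (fun _ => 1) L) + (-3) * Em_slice n m (fun _ => 1) L).
    + intro; ring.
    + replace (v - 3 * 1) with (v + (-3) * 1) by ring. apply inf_plus; [exact Hv|]. apply inf_scal; auto.
Qed.
End Conv.

Lemma in_len m s : in_Xm m s = true -> (1 <= length s)%nat.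
Proof. destruct s; simpl; [discriminate | lia]. Qed.

Lemma sumR_map_scal_r {A} (c : R) (f : A -> R) l :
  sumR (map (fun x => f x * c) l) = sumR (map f l) * c.
Proof. induction l; simpl; [ring | rewrite IHl; ring]. Qed.

Theorem mainTheorem10 (n m : nat) (Hm1 : (1 <= m)%nat) (Hmn : (m <= n)%nat) :
  exists (a : R) (b : nat -> R),
    Em_sum n m (fun s => / ell s) a /\
    (forall j : nat, (1 <= j <= m - 1)%nat ->
       Em_sum n m (fun s => tau j s / ell s) (b j)) /\
    INR m * a + sumR (map b (seq 1 (m - 1))) = 1.
Proof.
  assert (Ha : forall s, in_Xm m s = true -> -3 <= / ell s <= 3).
  { intros s Hs. pose proof (in_len _ _ Hs). unfold ell.
    apply le_INR in H. simpl in H. pose proof (Rinv_0_lt_compat (INR (length s)) ltac:(lra)).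
    assert (/ INR (length s) <= 1).
    { rewrite <- Rinv_1. apply Rinv_le_contravar; lra. } lra. }
  assert (Hb : forall j s, in_Xm m s = true -> -3 <= tau j s / ell s <= 3).
  { intros j s Hs. apply tau_bound, (in_len m), Hs. }
  destruct (conv n m Hm1 Hmn _ Ha) as [a HA].
  exists a, (fun j => proj1_sig (conv n m Hm1 Hmn _ (Hb j))).
  split; [exact HA|]. split.
  { intros j _. exact (proj2_sig (conv n m Hm1 Hmn _ (Hb j))). }
  set (b := fun j => proj1_sig (conv n m Hm1 Hmn _ (Hb j))).
  assert (HB : forall j, Em_sum n m (fun s => tau j s / ell s) (b j)).
  { intro j. exact (proj2_sig (conv n m Hm1 Hmn _ (Hb j))). }
  pose proof (inf_plus _ _ _ _ (inf_scal (INR m) _ _ HA)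
     (inf_list (fun j L => Em_slice n m (fun s => tau j s / ell s) L) b (seq 1 (m - 1))
        (fun j _ => HB j))) as Hc.
  apply (uniqueness_sum (Em_slice n m (fun _ => 1))); [| apply total_one; auto].
  refine (inf_ext _ _ _ _ Hc). intro L.
  rewrite !slice_SL. unfold SL.
  rewrite (sumR_map_ext (fun j => Em_slice n m (fun s => tau j s / ell s) L)
     (fun j => sumR (map (fun s => if in_Xm m s then tau j s / ell s * (/ INR n) ^ L else 0) (all_seqs n L))))
     by (intro; rewrite slice_SL; reflexivity).
  rewrite (sumR_swap (fun j s => if in_Xm m s then tau j s / ell s * (/ INR n) ^ L else 0)).
  rewrite <- sumR_map_scal, <- sumR_map_plus. apply sumR_map_ext; intro s.
  destruct (in_Xm m s) eqn:E.
    rewrite <- (per_seq m s Hm1 E). rewrite Rmult_plus_distr_r.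
    f_equal; [ring|].
    apply sumR_map_scal_r.
  - rewrite sumR_map_zero. ring.
Qed.
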